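(* Let $F(X)=c_0+c_1X+\cdots+c_{d-1}X^{d-1}+X^d\in\mathbb{Z}[X]$ be monic irreducible, $\xi$ a fixed root, and $L=\mathbb{Q}(\xi)$ Galois over $\mathbb{Q}$ of degree $d$ with $G=\mathrm{Gal}(L/\mathbb{Q})$. Assume $\{\sigma\xi\}_{\sigma\in G}$ is a normal basis of $L/\mathbb{Q}$. Let $K_1,\dots,K_r$ be the conjugacy classes of $G$ and let $(a_{K_j,i})_{i\ge0}$ be the sequence with characteristic polynomial $F$ whose first $d$ terms are the $j$-th column of $P\Gamma_\xi^{-1}\kappa$, where $P=[\sigma^{-1}(\xi^{i-1})]_{1\le i\le d,\sigma\in G}$, $\Gamma_\xi=[\sigma\tau^{-1}(\xi)]_{\sigma,\tau\in G}$, and $\kappa=[\kappa_{\tau,j}]_{\tau\in G,1\le j\le r}$ with $\kappa_{\tau,j}=1$ if $\tau\in K_j$ and $0$ otherwise. Let $\{X_\sigma\}_{\sigma\in G}$ be indeterminates, $\Gamma=[X_{\sigma\tau^{-1}}]_{\sigma,\tau\in G}$ the group matrix, and $\partial_\tau=\frac{1}{|G|}\frac{\partial\det\Gamma}{\partial X_\tau}$. Denote by $\partial_\tau(\xi)$ and $\det\Gamma_\xi$ the values obtained by substituting $X_\sigma\mapsto\sigma\xi$ for all $\sigma$. Then for every integer $i\ge0$, $$a_{K_j,i}=\frac{1}{\det\Gamma_\xi}\sum_{\sigma\in G}\sum_{\tau\in K_j}\sigma(\xi^i)\,\partial_{\sigma\tau}(\xi).$$ Moreover, regard $G$ as a subgroup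 of the symmetric group $S_d$ via its (simply transitive) action on the $d$ roots $\{\sigma\xi\}$ of $F$. If $G\subset A_d$, then $$a_{K_j,i}=\frac{1}{\det\Gamma_\xi}\mathrm{Tr}_G\Big(\xi^i\sum_{\tau\in K_j}\partial_\tau(\xi)\Big).$$ If $G\not\subset A_d$, set $G^+=G\cap A_d$ and choose $\delta\in G$ with $G=G^+\sqcup\delta G^+$; then $$a_{K_j,i}=\frac{1}{\det\Gamma_\xi}\big(\mathrm{Tr}_{G^+}-\delta\circ\mathrm{Tr}_{G^+}\big)\Big(\xi^i\sum_{\tau\in K_j}\partial_\tau(\xi)\Big).$$
   Context: Matrices indexed by $G$ use a fixed total order on $G$. A sequence $(a_i)$ has characteristic polynomial $F$ if $a_{n+d}=-\sum_{k=0}^{d-1}c_ka_{n+k}$ for all $n\ge0$. For a subgroup $H\le G$, $\mathrm{Tr}_H(x)=\sum_{h\in H}h(x)$ for $x\in L$. *)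

(* Defs.v *)
From HB Require Import structures.
From mathcomp Require Import all_boot all_order all_algebra all_fingroup all_field.
From mathcomp Require Import mpoly.
Set Implicit Arguments. Unset Strict Implicit. Unset Printing Implicit Defensive.
Import GRing.Theory.
Local Open Scope ring_scope.

(* Elements of G are indexed by 'I_#|G|
   via enum_val / enum_rank_in (the "fixed total order" on G).            *)

Section Defs.
Variable L : splittingFieldType rat.

Definition galG : {group gal_of (fullv : {vspace L})} := 'Gal(fullv / 1%VS)%G.

(* composition sigma o tau of field automorphisms.  MathComp's group law on
   gal_of satisfies (x * y)%g a = y (x a), so sigma o tau = (tau * sigma)%g. *)
Definition gcomp (s t : gal_of (fullv : {vspace L})) := (t * s)%g.

Lemma gcompE s t a : gcomp s t a = s (t a).
Proof. by rewrite /gcomp galM ?memvf. Qed.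

Definition gelt (k : 'I_#|galG|) : gal_of (fullv : {vspace L}) := enum_val k.

Definition gidx (g : gal_of (fullv : {vspace L})) : 'I_#|galG| :=
  enum_rank_in (group1 galG) g.

(* P = [sigma^{-1}(xi^{i-1})]_{1<=i<=d, sigma in G}  (rows 0-indexed) *)
Definition Pmat (xi : L) (d : nat) : 'M[L]_(d, #|galG|) :=
  \matrix_(i < d, s < #|galG|) ((gelt s)^-1)%g (xi ^+ i).

Definition Gamma_xi (xi : L) : 'M[L]_#|galG| :=
  \matrix_(s, t) (gcomp (gelt s) ((gelt t)^-1)%g) xi.

Definition kappa : 'M[L]_(#|galG|, #|classes galG|) :=
  \matrix_(t, j) ((gelt t
                    \in (@enum_val _ (mem (classes galG)) j : {set _}))%:R).

Definition group_matrix : 'M[{mpoly L[#|galG|]}]_#|galG| :=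
  \matrix_(s, t) 'X_(gidx (gcomp (gelt s) ((gelt t)^-1)%g)).

Definition dpart (xi : L) (tau : gal_of (fullv : {vspace L})) : L :=
  (#|galG|%:R)^-1 *
    (mderiv (gidx tau) (\det group_matrix)).@[fun k => gelt k xi].

Definition TrH (H : {set gal_of (fullv : {vspace L})}) (x : L) : L :=
  \sum_(h in H) h x.

(* The permutation of the roots {tau xi} induced by sigma, with the root
   tau xi labelled by tau: tau xi |-> sigma(tau xi) = (sigma o tau) xi,
   i.e. tau |-> sigma o tau = (tau * sigma)%g, the regular action 'R. *)
Definition root_perm (s : gal_of (fullv : {vspace L})) :
  {perm gal_of (fullv : {vspace L})} := actperm 'R s.

Definition Gplus : {set gal_of (fullv : {vspace L})} :=
  [set s in galG | ~~ odd_perm (root_perm s)].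

Definition has_charpoly (F : {poly int}) (a : nat -> L) : Prop :=
  forall n, a (n + (size F).-1)%N =
    - \sum_(k < (size F).-1) (F`_k)%:~R * a (n + k)%N.

End Defs.

(* Main.v *)
Require Import Defs.
From HB Require Import structures.
From mathcomp Require Import all_boot all_order all_algebra all_fingroup all_field.
From mathcomp Require Import mpoly.
Import GRing.Theory.
Local Open Scope ring_scope.


Section Jac.
Variables (R : comRingType) (m : nat) (i : 'I_m).
Local Notation D := (mderiv i).

Lemma mderiv_prod_seq (I : eqType) (r : seq I) (F : I -> {mpoly R[m]}) :
  uniq r ->
  D (\prod_(k <- r) F k) = \sum_(k <- r) D (F k) * \prod_(l <- r | l != k) F l.
Proof.
elim: r => [|x r IH] /=; first by rewrite !big_nil mderivC.
case/andP=> xr ur; rewrite !big_cons mderivM IH // eqxx /=.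
congr (_ + _).
  congr (_ * _); rewrite big_seq_cond [RHS]big_seq_cond; apply: eq_bigl => l.
  by case: (boolP (l \in r)) => //= lr; apply/esym/eqP => e; rewrite -e lr in xr.
rewrite big_distrr /= big_seq [RHS]big_seq; apply: eq_bigr => k kr.
have xk : (x != k) by apply/eqP => e; rewrite e kr in xr.
by rewrite big_cons xk mulrCA.
Qed.

Lemma mderiv_det n (A : 'M[{mpoly R[m]}]_n) :
  D (\det A) = \sum_k \sum_l D (A k l) * cofactor A k l.
Proof.
rewrite /determinant raddf_sum /=.
transitivity (\sum_(s : 'S_n) \sum_k (-1) ^+ s * (D (A k (s k)) *
     \prod_(l | l != k) A l (s l))).
  apply: eq_bigr => s _; rewrite -mulr_sumr.
  have -> : D ((-1) ^+ s * \prod_i0 A i0 (s i0)) = (-1) ^+ s * D (\prod_i0 A i0 (s i0)).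
    by rewrite !mulr_sign; case: (odd_perm s) => //; rewrite mderivN.
  by rewrite mderiv_prod_seq ?index_enum_uniq.
rewrite exchange_big /=; apply: eq_bigr => k _.
rewrite (partition_big (fun s : 'S_n => s k) predT) //=.
apply: eq_bigr => l _; rewrite expand_cofactor mulr_sumr; apply: eq_bigr => s /eqP sk.
rewrite sk mulrCA; congr (_ * (_ * _)); apply: eq_bigl => l'; by rewrite eq_sym.
Qed.
End Jac.

Lemma mderivXU (R : comRingType) m (i j : 'I_m) :
  mderiv i ('X_j : {mpoly R[m]}) = (j == i)%:R.
Proof.
rewrite mderivX mnm1E; case: eqP => [->|_]; last by rewrite scale0r.
by rewrite -[X in (X - _)%MM]add0m addmK mpolyX0 scale1r.
Qed.

Lemma odd_conj (T1 T2 : finType) (f : T1 -> T2) (g : T2 -> T1) :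
  cancel f g -> cancel g f -> forall (q : {perm T1}) (q' : {perm T2}),
  (forall y, q' y = f (q (g y))) -> odd_perm q' = odd_perm q.
Proof.
move=> fK gK q q' Hq; have [ts Dq dts] := prod_tpermP q.
pose ts' := [seq (f t.1, f t.2) | t <- ts].
have -> : q' = (\prod_(t <- ts') tperm t.1 t.2)%g.
  apply/permP => y; rewrite Hq Dq {Hq Dq dts} /ts'.
  elim: ts y => [|t ts IH] y /=; first by rewrite !big_nil !perm1 gK.
  by rewrite !big_cons !permM -IH (inj_tperm _ _ _ (can_inj gK)) !fK.
rewrite Dq !odd_perm_prod ?size_map //.
rewrite all_map; apply: sub_all dts => t /=.
by rewrite /dpair (inj_eq (can_inj fK)).
Qed.

Section Main.
Variable L : splittingFieldType rat.
Local Notation T := (gal_of (fullv : {vspace L})).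
Local Notation n := #|galG L|.

Lemma memG (x : T) : x \in galG L.
Proof. by rewrite /galG /= gal_kHom ?sub1v // k1AHom. Qed.

Lemma galGT : (galG L : {set T}) = [set: T].
Proof. by apply/setP => x; rewrite inE memG. Qed.

Lemma geltK : cancel (@gidx L) (@gelt L).
Proof. by move=> x; rewrite /gelt /gidx enum_rankK_in ?memG. Qed.

Lemma gidxK : cancel (@gelt L) (@gidx L).
Proof. by move=> k; rewrite /gelt /gidx enum_valK_in. Qed.

Lemma gidx_inj : injective (@gidx L).
Proof. exact: can_inj geltK. Qed.

Lemma sum_idx (F : 'I_n -> L) : \sum_(k < n) F k = \sum_(x : T) F (gidx x).
Proof.
rewrite (reindex (@gidx L)) //; exists (@gelt L) => k _; [exact: geltK|exact: gidxK].
Qed.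

Lemma card_n : #|[set: T]| = n.
Proof. by rewrite -galGT. Qed.

Lemma n_neq0 : (n%:R : L) != 0.
Proof.
have -> : (n%:R : L) = (n%:R : rat) *: 1 by rewrite scaler_nat.
rewrite scaler_eq0 oner_eq0 orbF Num.Theory.pnatr_eq0.
by rewrite -lt0n cardG_gt0.
Qed.

Lemma inv_uniq m (A B : 'M[L]_m) : B *m A = 1%:M -> invmx A = B.
Proof.
move=> BA; have [_ Au] := mulmx1_unit BA.
by rewrite -[LHS]mul1mx -BA mulmxK.
Qed.

Variable xi : L.
Local Notation Gam := (Gamma_xi xi).

Lemma GamE (a b : T) : Gam (gidx a) (gidx b) = gcomp a b^-1%g xi.
Proof. by rewrite mxE !geltK. Qed.

Definition Mi (a b : T) := invmx Gam (gidx a) (gidx b).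

Lemma Gam_unit :
  basis_of fullv [seq (s : T) xi | s in galG L] -> Gam \in unitmx.
Proof.
move=> bX; rewrite unitmxE unitfE; apply/negP => /det0P [v nz vG].
pose c (x : T) := v 0 (gidx x).
have H1 (u : T) : \sum_x c x * x (u xi) = 0.
  have := congr1 (fun M : 'rV[L]_n => M 0 (gidx u^-1%g)) vG.
  rewrite !mxE sum_idx => E; rewrite -[in RHS]E; apply: eq_bigr => x _.
  by rewrite GamE invgK gcompE.
pose X := in_tuple [seq (s : T) xi | s in galG L].
have H2 (a : L) : \sum_x c x * x a = 0.
  case/andP: bX => /eqP spX _.
  have : a \in <<X>>%VS by rewrite spX memvf.
  move/coord_span => ->.
  under eq_bigr => x _ do rewrite linear_sum mulr_sumr.
  rewrite exchange_big /= big1 // => i _.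
  under eq_bigr => x _ do rewrite linearZ /= -scalerAr.
  rewrite -scaler_sumr.
  have : X`_i \in X by rewrite mem_nth.
  case/mapP => u _ ->; by rewrite H1 scaler0.
have c0 x : c x = 0 := @gal_independent _ _ fullv predT c (fun a _ => H2 a) x isT.
case/eqP: nz; apply/rowP => k; rewrite mxE -[k]gidxK.
exact: c0.
Qed.

Hypothesis Gu : Gam \in unitmx.

Lemma Mi_shift g a b : Mi (gcomp a g) (gcomp b g) = Mi a b.
Proof.
pose h k := gidx (gcomp (gelt k) g).
have hinj : injective h.
  move=> k1 k2 /gidx_inj; rewrite /gcomp => /mulgI; exact: (can_inj gidxK).
pose N := \matrix_(k, l) invmx Gam (h k) (h l).
suff E : invmx Gam = N by rewrite /Mi [in RHS]E mxE /h !geltK.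
apply: inv_uniq; apply/matrixP => k c; rewrite !mxE.
have e l : Gam l c = Gam (h l) (h c).
  by rewrite -[l in LHS]gidxK -[c in LHS]gidxK GamE /h GamE /gcomp invMg !mulgA mulgKV.
under eq_bigr => l _ do rewrite mxE e.
transitivity (\sum_l invmx Gam (h k) l * Gam l (h c)).
  by rewrite [in RHS](reindex_inj hinj).
have := congr1 (fun M : 'M[L]_n => M (h k) (h c)) (mulVmx Gu).
by rewrite !mxE (inj_eq hinj) => ->.
Qed.

Definition ev (k : 'I_n) := gelt k xi.

Lemma eval_GM : map_mx (meval ev) (group_matrix L) = Gam.
Proof. by apply/matrixP => k l; rewrite !mxE mevalXU /ev geltK. Qed.

Lemma cofE k l : (cofactor (group_matrix L) k l).@[ev] = \det Gam * Mi (gelt l) (gelt k).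
Proof.
have := congr1 (fun M : 'M[L]_n => M l k) (map_mx_adj (meval ev) (group_matrix L)).
rewrite !mxE eval_GM => ->.
rewrite /Mi !gidxK /invmx Gu mxE mxE mulrA mulfV ?mul1r //.
by rewrite -unitfE -unitmxE.
Qed.

Lemma dpartE (tau : T) : dpart xi tau = \det Gam * Mi 1%g tau.
Proof.
rewrite /dpart mderiv_det rmorph_sum /=.
under eq_bigr => k _ do rewrite rmorph_sum /=.
under eq_bigr => k _ do under eq_bigr => l _ do
  rewrite rmorphM /= mxE mderivXU rmorph_nat cofE.
rewrite sum_idx; under eq_bigr => a _ do rewrite sum_idx.
have E a x : (gcomp a x^-1%g == tau) = (a == gcomp tau x).
  by rewrite /gcomp; apply/eqP/eqP => [<-|->]; [rewrite mulKVg|rewrite mulKg].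
under eq_bigr => a _ do under eq_bigr => x _ do rewrite !geltK (inj_eq gidx_inj) E.
rewrite exchange_big /=.
transitivity (#|galG L|%:R^-1 * \sum_(x : T) \det Gam * Mi 1%g tau).
  congr (_ * _); apply: eq_bigr => x _.
  rewrite (bigD1 (gcomp tau x)) //= eqxx mul1r big1 ?addr0.
    by rewrite -{1}[x]mulg1 Mi_shift.
  by move=> a /negbTE ->; rewrite mul0r.
rewrite sumr_const -cardsT card_n -(mulr_natr (\det Gam * Mi 1%g tau)) mulrC mulfK //; exact: n_neq0.
Qed.

Lemma MiE a b : Mi a b = (\det Gam)^-1 * dpart xi (gcomp b a^-1%g).
Proof.
rewrite dpartE mulKf; last by rewrite -unitfE -unitmxE.
by rewrite -(Mi_shift a^-1%g) /gcomp mulVg.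
Qed.

Lemma class_conj_sum {K : {set T}} (HK : K \in classes (galG L)) (f : T -> L) s :
  \sum_(tau in K) f (tau * s)%g = \sum_(b in K) f (s * b)%g.
Proof.
rewrite (reindex_inj (conjg_inj s^-1%g)) /=.
have nK : s^-1%g \in ('N(K))%g.
  case/imsetP: HK => x _ ->; exact: (subsetP (class_norm x _)) _ (memG _).
apply: eq_big => b; first by rewrite memJ_norm.
by move=> _; rewrite /conjg invgK -mulgA mulgVK.
Qed.

Lemma entryE d (i : 'I_d) j :
  let K := (enum_val j : {set T}) in
  (Pmat xi d *m invmx Gam *m kappa L) i j =
  (\det Gam)^-1 * \sum_(s : T) \sum_(tau in K) s (xi ^+ i) * dpart xi (gcomp s tau).
Proof.
move=> K; rewrite mxE.
transitivity (\sum_(b : T) (\sum_(a : T) a^-1%g (xi ^+ i) * Mi a b) * (b \in K)%:R).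
  rewrite sum_idx; apply: eq_bigr => b _; rewrite !mxE sum_idx geltK.
  by congr (_ * _); apply: eq_bigr => a _; rewrite !mxE geltK.
transitivity ((\det Gam)^-1 * \sum_(a : T) \sum_(b in K) a^-1%g (xi ^+ i) * dpart xi (a^-1 * b)%g).
  rewrite mulr_sumr; under eq_bigr => b _ do rewrite mulr_suml.
  rewrite exchange_big /=; apply: eq_bigr => a _.
  rewrite [in RHS]big_mkcond mulr_sumr /=; apply: eq_bigr => b _.
  case: (b \in K); last by rewrite mulr0 mulr0.
  by rewrite mulr1 MiE /gcomp mulrCA.
congr (_ * _); rewrite (reindex_inj invg_inj) /=; apply: eq_bigr => s _.
rewrite invgK; symmetry.
exact: (class_conj_sum (enum_valP j) (fun g => s (xi ^+ i) * dpart xi g)).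
Qed.

Lemma gal_dpart (s : T) tau :
  s (dpart xi tau) = (-1) ^+ odd_perm (root_perm s) * dpart xi (gcomp s tau).
Proof.
pose pf k := gidx (gcomp s (gelt k)).
have pinj : injective pf.
  move=> k1 k2 /gidx_inj; rewrite /gcomp => /mulIg; exact: (can_inj gidxK).
pose p := perm pinj.
have eG : map_mx s Gam = row_perm p Gam.
  by apply/matrixP => k l; rewrite !mxE permE /pf geltK !gcompE.
have edet : s (\det Gam) = (-1) ^+ p * \det Gam.
  by rewrite -det_map_mx eG row_permE det_mulmx det_perm.
have einv : invmx (row_perm p Gam) = col_perm p (invmx Gam).
  apply: inv_uniq; apply/matrixP => a c; rewrite !mxE.
  transitivity (\sum_b invmx Gam a b * Gam b c).
    by rewrite [in RHS](reindex_inj (@perm_inj _ p)); apply: eq_bigr => b _; rewrite !mxE.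
  by have := congr1 (fun M : 'M[L]_n => M a c) (mulVmx Gu); rewrite !mxE => ->.
have eMi : s (Mi 1%g tau) = Mi 1%g (gcomp s tau).
  have := congr1 (fun M : 'M[L]_n => M (gidx 1%g) (gidx tau)) (map_invmx s Gam).
  by rewrite mxE eG einv mxE permE /pf geltK => ->.
have op : odd_perm p = odd_perm (root_perm s).
  apply: (@odd_conj _ _ (@gidx L) (@gelt L) geltK gidxK) => y.
  by rewrite permE /pf /root_perm actpermE.
have Hm : s (\det Gam * Mi 1%g tau) = s (\det Gam) * s (Mi 1%g tau) by rewrite rmorphM.
by rewrite !dpartE Hm edet eMi op mulrA.
Qed.

Lemma main_sgn (K : {set T}) i :
  \sum_(s : T) \sum_(tau in K) s (xi ^+ i) * dpart xi (gcomp s tau) =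
  \sum_(s : T) (-1) ^+ odd_perm (root_perm s) * s (xi ^+ i * \sum_(tau in K) dpart xi tau).
Proof.
apply: eq_bigr => s _.
have -> : s (xi ^+ i * \sum_(tau in K) dpart xi tau) =
   s (xi ^+ i) * \sum_(tau in K) s (dpart xi tau) by rewrite rmorphM rmorph_sum.
rewrite !mulr_sumr; apply: eq_bigr => tau _.
by rewrite [s (dpart _ _)]gal_dpart [in RHS]mulrCA (mulrA ((-1) ^+ _)) -expr2 sqrr_sign mul1r.
Qed.

Definition Phi (K : {set T}) (x : L) :=
  (\det Gam)^-1 * \sum_(s : T) \sum_(tau in K) s x * dpart xi (gcomp s tau).

Lemma PhiD K x y : Phi K (x + y) = Phi K x + Phi K y.
Proof.
rewrite /Phi -mulrDr -big_split; congr (_ * _); apply: eq_bigr => s _.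
rewrite -big_split; apply: eq_bigr => tau _.
have -> : s (x + y) = s x + s y by rewrite rmorphD.
by rewrite mulrDl.
Qed.

Lemma Phi0 K : Phi K 0 = 0.
Proof.
rewrite /Phi big1 ?mulr0 // => s _; rewrite big1 // => tau _.
have -> : s 0 = 0 by rewrite rmorph0.
by rewrite mul0r.
Qed.

Lemma PhiN K x : Phi K (- x) = - Phi K x.
Proof. by apply/eqP; rewrite -addr_eq0 -PhiD addNr Phi0. Qed.

Lemma PhiZ K (c : int) x : Phi K (c%:~R * x) = c%:~R * Phi K x.
Proof.
rewrite /Phi [in RHS]mulrCA [in RHS]mulr_sumr; congr (_ * _); apply: eq_bigr => s _.
rewrite [in RHS]mulr_sumr; apply: eq_bigr => tau _.
have -> : s (c%:~R * x) = c%:~R * s x by rewrite rmorphM rmorph_int.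
by rewrite -mulrA.
Qed.

Lemma Phi_sum K I (r : seq I) (P : pred I) (G : I -> L) :
  Phi K (\sum_(k <- r | P k) G k) = \sum_(k <- r | P k) Phi K (G k).
Proof. exact: (big_morph (Phi K) (PhiD K) (Phi0 K)). Qed.

Lemma rec_Phi (F : {poly int}) K :
  F \is monic -> root (map_poly (fun c : int => c%:~R) F : {poly L}) xi ->
  has_charpoly F (fun i => Phi K (xi ^+ i)).
Proof.
move=> mF rF m; set d := (size F).-1.
have sF : size F = d.+1 by rewrite prednK // size_poly_gt0 monic_neq0.
have lF : F`_d = 1 by rewrite -(monicP mF) lead_coefE.
have key : xi ^+ d = - \sum_(k < d) (F`_k)%:~R * xi ^+ k.
  move: rF; rewrite /root horner_coef size_map_poly_id0; last first.
    by rewrite (monicP mF) rmorph1 oner_neq0.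
  rewrite sF big_ord_recr /= coef_map /= lF rmorph1 mul1r addrC addr_eq0 => /eqP ->.
  by congr (- _); apply: eq_bigr => k _; rewrite coef_map.
rewrite exprD key mulrN mulr_sumr PhiN Phi_sum; congr (- _).
by apply: eq_bigr => k _; rewrite mulrCA -exprD PhiZ.
Qed.
End Main.

Theorem theorem1p2 (L : splittingFieldType rat) (F : {poly int}) (xi : L) :
  F \is monic ->
  irreducible_poly (map_poly (fun c : int => c%:~R) F : {poly rat}) ->
  root (map_poly (fun c : int => c%:~R) F : {poly L}) xi ->
  <<1; xi>>%VS = fullv ->
  galois 1%VS (fullv : {vspace L}) ->
  \dim (fullv : {vspace L}) = (size F).-1 ->
  basis_of fullv [seq (s : gal_of (fullv : {vspace L})) xi | s in galG L] ->
  forall (j : 'I_#|classes (galG L)|) (a : nat -> L),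
    has_charpoly F a ->
    (forall i : 'I_(size F).-1,
        a i = (Pmat xi (size F).-1 *m invmx (Gamma_xi xi) *m kappa L) i j) ->
    let K := (enum_val j : {set gal_of (fullv : {vspace L})}) in
    let y i := xi ^+ i * \sum_(tau in K) dpart xi tau in
    (forall i : nat,
        a i = (\det (Gamma_xi xi))^-1 *
              \sum_(s : gal_of (fullv : {vspace L}) | s \in galG L) \sum_(tau in K) s (xi ^+ i) * dpart xi (gcomp s tau))
    /\ (galG L \subset Gplus L ->
        forall i : nat, a i = (\det (Gamma_xi xi))^-1 * TrH (galG L) (y i))
    /\ (~~ (galG L \subset Gplus L) ->
        forall delta : gal_of (fullv : {vspace L}), delta \in galG L ->
        Gplus L :&: (Gplus L :* delta)%g = set0 ->
        Gplus L :|: (Gplus L :* delta)%g = galG L ->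
        forall i : nat,
          a i = (\det (Gamma_xi xi))^-1 *
                (TrH (Gplus L) (y i) - delta (TrH (Gplus L) (y i)))).
Proof.
move=> mF _ rF _ _ _ bX j a ha Ha K y.
have Gu := @Gam_unit L xi bX.
set d := (size F).-1.
have main : forall i, a i = Phi L xi K (xi ^+ i).
  elim/ltn_ind => i IH; case: (ltnP i d) => [lt|ge].
    by rewrite (Ha (Ordinal lt)) (entryE _ _ Gu).
  rewrite -(subnK ge) ha (rec_Phi _ _ _ _ mF rF); congr (- _).
  apply: eq_bigr => k _; rewrite IH // -{2}(subnK ge) ltn_add2l; exact: ltn_ord.
have sgn1 s : s \in Gplus L -> (-1) ^+ odd_perm (root_perm s) = 1 :> L.
  by rewrite inE => /andP[_ /negbTE ->].
split; [|split].
- move=> i; rewrite main /Phi; congr (_ * _); apply: eq_bigl => s; by rewrite memG.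
- move=> sub i; rewrite main /Phi (main_sgn _ _ Gu); congr (_ * _).
  rewrite /TrH; apply: eq_big => [s|s _]; first by rewrite memG.
  by rewrite sgn1 ?mul1r // (subsetP sub) ?memG.
move=> _ delta _ HI HU i; rewrite main /Phi (main_sgn _ _ Gu); congr (_ * _).
set Y := y i.
have dis : [disjoint Gplus L & (Gplus L :* delta)%g] by rewrite -setI_eq0 HI.
rewrite (eq_bigl [predU Gplus L & (Gplus L :* delta)%g]); last first.
  by move=> s; rewrite /= -in_setU HU memG.
rewrite bigU //=; congr (_ + _).
  by apply: eq_bigr => s Hs; rewrite sgn1 ?mul1r.
have -> : delta (TrH (Gplus L) Y) = \sum_(h in Gplus L) delta (h Y).
  by rewrite /TrH rmorph_sum.
rewrite -sumrN -rcosetE /rcoset big_imset /=; last by move=> x1 x2 _ _; apply: mulIg.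
apply: eq_bigr => h Hh.
have nP : (h * delta)%g \notin Gplus L.
  apply/negP => Hp; move: HI => /setP /(_ (h * delta)%g).
  by rewrite in_setI Hp -rcosetE /rcoset (imset_f (fun x0 => (x0 * delta)%g) Hh) in_set0.
move: nP; rewrite inE memG /= negbK => ->.
by rewrite expr1 mulN1r galM ?memvf.
Qed.
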